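(* Let $\mathsf{K}$ be a finite simplicial complex with vertex set $P\subset\mathbb{R}^d$ and $p>0$, and let $\mathscr{M}$ and $\prec_\Omega$ be as constructed in the context; write the cycles of $\mathscr{M}$ as $\zeta_1\prec_\Omega\cdots\prec_\Omega\zeta_m$. Let $\zeta'_1,\dots,\zeta'_m$ be any $p$-cycles with $\operatorname{span}\{[\zeta'_1],\dots,[\zeta'_m]\}=H_p(\mathsf{K})$, indexed so that $r_P([\zeta'_i])<r_P([\zeta'_j])$ implies $i<j$. Then $r_P(\zeta_j)\le r_P([\zeta'_j])$ for all $1\le j\le m$.
   Context: All homology is with $\mathbb{Z}_2$ coefficients. For $v\in\mathbb{R}^d$ and a simplex $\sigma$, $r_v(\sigma)=\max_{x\text{ vertex of }\sigma}\|v-x\|_2$; for a nonzero chain $\zeta$, $r_v(\zeta)=\max_{\sigma\in\zeta}r_v(\sigma)$. Define $r_P(\zeta)=\min_{v\in P}r_v(\zeta)$ and $r_P([\zeta])=\min_{v\in P}\min_{\eta\in[\zeta]}r_v(\eta)$. For each $v\in P$, $\prec_v$ is a fixed total order on the simplices of $\mathsf{K}$ with $\sigma_1\prec_v\sigma_2$ whenever $\sigma_1$ is a proper face of $\sigma_2$ or $r_v(\sigma_1)<r_v(\sigma_2)$; for nonzero chains, $\zeta\prec_v\zeta'$ iff the $\prec_v$-largest simplex of $\zeta$ precedes that of $\zeta'$. $\mathcal{D}_v(\mathsf{K})$ is the simplexwise filtration adding simplices in $\prec_v$-order. Let $\zeta_{v,1}\prec_v\cdots\prec_v\zeta_{v,\beta}$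 be the essential $p$-cycles of $\mathcal{D}_v(\mathsf{K})$ computed by standard reduction (reduce the $\mathbb{Z}_2$ boundary matrix left to right by adding an earlier column with the same lowest-one row until all nonzero columns have distinct lowest ones, recording the column operations in $V$ starting from the identity; essential $p$-cycles are columns $V_i$ with $\sigma_i$ a $p$-simplex, reduced column $i$ zero, and $i$ not the lowest-one row of any nonzero reduced column). Let $\Omega=\{\zeta_{v,i}: v\in P,\ 1\le i\le\beta\}$, totally ordered by $\prec_\Omega$ so that $r_v(\zeta_{v,i})<r_{v'}(\zeta_{v',i'})$ implies $\zeta_{v,i}\prec_\Omega\zeta_{v',i'}$, and $\zeta_{v,i}\prec_v\zeta_{v,i'}$ implies $\zeta_{v,i}\prec_\Omega\zeta_{v,i'}$, with other ties broken arbitrarily. $\mathscr{M}$ is built by scanning $\Omega$ in $\prec_\Omega$-order, starting from $\mathscr{M}=\emptyset$, and adding a cycle $\zeta$ to $\mathscr{M}$ iff $[\zeta]$ is not in the span of the classes of the cycles already in $\mathscr{M}$. (Then $|\mathscr{M}|=m=\dim H_p(\mathsf{K})$.) *)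

(* Defs.v *)
(* Z_2 chains are represented as finite sets of simplices
   (addition = symmetric difference). *)
From HB Require Import structures.
From mathcomp Require Import all_boot all_order all_algebra.
From mathcomp Require Import reals.
Set Implicit Arguments. Unset Strict Implicit. Unset Printing Implicit Defensive.
Import Order.TTheory GRing.Theory Num.Theory.
Local Open Scope ring_scope.

Definition symd (T : finType) (A B : {set T}) : {set T} := (A :\: B) :|: (B :\: A).

Section Complex.
Variable V : finType.

Definition is_complex (K : {set {set V}}) : Prop :=
  [/\ set0 \notin K,
      (forall s t : {set V}, s \in K -> t \subset s -> t != set0 -> t \in K)
    & (forall x : V, [set x] \in K)].

Definition facet (a b : {set V}) : bool := (a \subset b) && (#|b| == #|a|.+1).

Definition bnd (c : {set {set V}}) : {set {set V}} :=
  [set t : {set V} | (t != set0) && odd #|[set s in c | facet t s]|].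

(* c is a p-chain of K (a p-simplex has p+1 vertices) *)
Definition pchain (K : {set {set V}}) (p : nat) (c : {set {set V}}) : bool :=
  c \subset [set s in K | #|s| == p.+1].

Definition pcycle (K : {set {set V}}) (p : nat) (c : {set {set V}}) : Prop :=
  pchain K p c /\ bnd c = set0.

Definition homologous (K : {set {set V}}) (p : nat) (z w : {set {set V}}) : bool :=
  [exists c : {set {set V}}, pchain K p.+1 c && (bnd c == symd z w)].

Definition sumch (L : seq {set {set V}}) : {set {set V}} := foldr (@symd _) set0 L.

Definition in_span (K : {set {set V}}) (p : nat) (z : {set {set V}})
  (L : seq {set {set V}}) : bool :=
  [exists b : (size L).-tuple bool, homologous K p z (sumch (mask b L))].

Section Reduction.
Variable s : seq {set V}.   (* the simplices listed in filtration order *)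
Variable p : nat.
Local Notation N := (size s).
Local Notation col := {set 'I_N}.

Definition bdcol (j : 'I_N) : col := [set i : 'I_N | facet (nth set0 s i) (nth set0 s j)].

(* lowest one (1 + row index), 0 for the zero column *)
Definition low (c : col) : nat := \big[maxn/0%N]_(i in c) (i : nat).+1.

(* reduce one column (pair R-column, V-column) against the earlier reduced columns;
   fuel N.+1 suffices since each addition strictly decreases the lowest one *)
Fixpoint red_col (fuel : nat) (prev : seq (col * col)) (RV : col * col) : col * col :=
  match fuel with
  | 0 => RV
  | fuel'.+1 =>
      let k := find (fun q : col * col => low q.1 == low RV.1) prev in
      if (low RV.1 != 0%N) && (k < size prev)%N then
        let q := nth (set0, set0) prev k in
        red_col fuel' prev (symd RV.1 q.1, symd RV.2 q.2)
      else RV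
  end.

(* reduced matrix R and column-operation matrix V, as lists of columns (R_j, V_j) *)
Definition reduction : seq (col * col) :=
  foldl (fun (prev : seq (col * col)) (j : 'I_N) => rcons prev (red_col N.+1 prev (bdcol j, [set j])))
        [::] (enum 'I_N).

Definition ess_idx : seq 'I_N :=
  [seq j : 'I_N <- enum 'I_N |
     [&& #|nth set0 s j| == p.+1,
         (nth (set0, set0) reduction j).1 == set0
       & ~~ has (fun q : col * col => low q.1 == (j : nat).+1) reduction]].

(* essential p-cycles, in increasing filtration order *)
Definition ess : seq {set {set V}} :=
  [seq [set nth set0 s (i : nat) | i : 'I_N in (nth (set0, set0) reduction j).2] | j : 'I_N <- ess_idx].
End Reduction.

Section Geometry.
Variable R : realType.
Variable d : nat.
Variable pt : V -> 'rV[R]_d.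

Definition dist (x y : 'rV[R]_d) : R :=
  Num.sqrt (\sum_(i < d) (x ord0 i - y ord0 i) ^+ 2).

(* r_v(sigma) and r_v(zeta) (distances are >= 0, so 0 is a neutral default) *)
Definition rs (v : V) (sg : {set V}) : R := \big[Num.max/0]_(x in sg) dist (pt v) (pt x).
Definition rc (v : V) (c : {set {set V}}) : R := \big[Num.max/0]_(sg in c) rs v sg.

Definition minseq (l : seq R) : R :=
  if l is x :: l' then foldr Num.min x l' else 0.

Definition rP (c : {set {set V}}) : R := minseq [seq rc v c | v <- enum V].

Definition rPcls (K : {set {set V}}) (p : nat) (z : {set {set V}}) : R :=
  minseq [seq rc v e | v <- enum V,
            e <- enum [set e : {set {set V}} | (e != set0) && homologous K p z e]].

(* ord v enumerates the simplices of K in a total order prec_v *)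
Definition valid_orders (K : {set {set V}}) (ord : V -> seq {set V}) : Prop :=
  forall v, [/\ uniq (ord v), (forall sg, (sg \in ord v) = (sg \in K))
     & (forall s1 s2, s1 \in K -> s2 \in K ->
          (s1 \proper s2) || (rs v s1 < rs v s2) ->
          (index s1 (ord v) < index s2 (ord v))%N)].

(* zeta_{v,i} (0-based i) *)
Definition omcyc (p : nat) (ord : V -> seq {set V}) (a : V * nat) : {set {set V}} :=
  nth set0 (ess (ord a.1) p) a.2.

(* omega lists Omega (indexed by pairs (v,i)) in the order prec_Omega *)
Definition valid_omega (p : nat) (ord : V -> seq {set V}) (omega : seq (V * nat)) : Prop :=
  [/\ uniq omega,
      (forall a, (a \in omega) = (a.2 < size (ess (ord a.1) p))%N),
      (forall a b, a \in omega -> b \in omega ->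
          rc a.1 (omcyc p ord a) < rc b.1 (omcyc p ord b) ->
          (index a omega < index b omega)%N)
    & (forall v i i', (v, i) \in omega -> (v, i') \in omega -> (i < i')%N ->
          (index (v, i) omega < index (v, i') omega)%N)].
End Geometry.

Definition buildM (K : {set {set V}}) (p : nat) (cycs : seq {set {set V}}) : seq {set {set V}} :=
  foldl (fun M z => if in_span K p z M then M else rcons M z) [::] cycs.

Definition Mcycles (p : nat) (K : {set {set V}}) (ord : V -> seq {set V})
  (omega : seq (V * nat)) : seq {set {set V}} :=
  buildM K p [seq omcyc p ord a | a <- omega].

End Complex.

(* Main.v *)
Require Import Defs.
From HB Require Import structures.
From mathcomp Require Import all_boot all_order all_algebra.
From mathcomp Require Import reals zify.
Set Implicit Arguments. Unset Strict Implicit. Unset Printing Implicit Defensive.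
Import Order.TTheory GRing.Theory Num.Theory.
Section Chains.
Variable V : finType.
Implicit Types A B C : {set {set V}}.

Lemma in_symd (T : finType) (A B : {set T}) x : (x \in symd A B) = (x \in A) (+) (x \in B).
Proof. by rewrite /symd !inE; case: (x \in A); case: (x \in B). Qed.

Lemma symdC (T : finType) (A B : {set T}) : symd A B = symd B A.
Proof. by apply/setP=> x; rewrite !in_symd addbC. Qed.
Lemma symdA (T : finType) (A B C : {set T}) : symd A (symd B C) = symd (symd A B) C.
Proof. by apply/setP=> x; rewrite !in_symd addbA. Qed.
Lemma symd0 (T : finType) (A : {set T}) : symd A set0 = A.
Proof. by apply/setP=> x; rewrite !in_symd inE addbF. Qed.
Lemma sym0d (T : finType) (A : {set T}) : symd set0 A = A.
Proof. by rewrite symdC symd0. Qed.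
Lemma symdd (T : finType) (A : {set T}) : symd A A = set0.
Proof. by apply/setP=> x; rewrite !in_symd inE addbb. Qed.
Lemma symdK (T : finType) (A B : {set T}) : symd (symd A B) B = A.
Proof. by rewrite -symdA symdd symd0. Qed.

Lemma odd_card_symd (T : finType) (X Y : {set T}) :
  odd #|symd X Y| = odd #|X| (+) odd #|Y|.
Proof.
have hX := cardsID Y X; have hY := cardsID X Y.
have hs : #|symd X Y| = #|X :\: Y| + #|Y :\: X|.
  rewrite /symd cardsU; have -> : (X :\: Y) :&: (Y :\: X) = set0.
    by apply/setP=> x; rewrite !inE; case: (x \in X); case: (x \in Y).
  by rewrite cards0 subn0.
rewrite hs -hX -hY setIC !oddD.
by case: (odd #|Y :&: X|); case: (odd #|X :\: Y|); case: (odd #|Y :\: X|).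
Qed.

Lemma bnd_symd A B : bnd (symd A B) = symd (bnd A) (bnd B).
Proof.
apply/setP=> t; rewrite in_symd !inE.
have -> : [set s in symd A B | facet t s] =
  symd [set s in A | facet t s] [set s in B | facet t s].
  by apply/setP=> s; rewrite !(inE, in_symd); case: (facet t s); rewrite ?andbT ?andbF.
by rewrite odd_card_symd; case: (t != set0).
Qed.

Lemma bnd0 : bnd (set0 : {set {set V}}) = set0.
Proof.
apply/setP=> t; rewrite !inE.
have -> : [set s in (set0 : {set {set V}}) | facet t s] = set0.
  by apply/setP=> s; rewrite !inE.
by rewrite cards0 andbF.
Qed.

Lemma bnd1 (s : {set V}) : bnd [set s] = [set t | (t != set0) && facet t s].
Proof.
apply/setP=> t; rewrite !inE.
case: (boolP (facet t s)) => h.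
  have -> : [set x in [set s] | facet t x] = [set s].
    by apply/setP=> x; rewrite !inE; case: eqP => // ->.
  by rewrite cards1 andbT.
have -> : [set x in [set s] | facet t x] = set0.
  by apply/setP=> x; rewrite !inE; case: eqP => // ->; rewrite (negbTE h).
by rewrite cards0 !andbF.
Qed.

Lemma bndbnd1 (s : {set V}) : bnd (bnd [set s]) = set0.
Proof.
apply/setP=> u; rewrite bnd1 !inE.
case: (boolP (u == set0)) => //= u0.
set T := [set x in _ | _].
suff : #|T| = 0%N \/ #|T| = 2 by case=> ->.
case: (boolP ((u \subset s) && (#|s| == #|u|.+2))) => [/andP [us /eqP cs] | h]; last first.
  left; apply/eqP; rewrite cards_eq0; apply/eqP/setP=> t; rewrite !inE.
  apply/negP=> /andP [/andP [_ /andP [ts /eqP cts]] /andP [ut /eqP cut]].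
  move/negP: h; apply; rewrite (subset_trans ut ts) /= cts cut.
  by [].
right.
have -> : T = (fun x => x |: u) @: (s :\: u).
  apply/setP=> t; rewrite !inE; apply/idP/imsetP.
    move=> /andP [/andP [_ /andP [ts /eqP cts]] /andP [ut /eqP cut]].
    have c1 : #|t :\: u| = 1%N.
      by rewrite cardsD (setIidPr ut) cut subSnn.
    have [x hx] := cards1P (introT eqP c1).
    have xt : x \in t :\: u by rewrite hx set11.
    exists x; first by move: xt; rewrite !inE => /andP [-> xt]; rewrite (subsetP ts).
    apply/setP=> y; rewrite !inE; apply/idP/idP.
      move=> yt; case: (boolP (y \in u)) => yu; first by rewrite orbT.
      have : y \in t :\: u by rewrite inE yu.
      by rewrite hx inE => ->.
    by case/orP=> [/eqP -> | /(subsetP ut)]; [move: xt; rewrite inE => /andP [] |].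
  case=> x; rewrite inE => /andP [xu xs] ->.
  have ct : #|x |: u| = #|u|.+1 by rewrite cardsU1 xu.
  apply/andP; split; last by rewrite /facet subsetUr ct eqxx.
  rewrite /facet ct cs eqxx andbT.
  apply/andP; split.
    by apply/set0Pn; exists x; rewrite !inE eqxx.
  by apply/subsetP=> y; rewrite !inE => /orP [/eqP -> // | /(subsetP us)].
rewrite card_in_imset ?cardsD ?(setIidPr us) ?cs //.
  by rewrite -addn2 addKn.
move=> x y; rewrite !inE => /andP [xu _] /andP [yu _] e.
have : x \in y |: u by rewrite -e !inE eqxx.
by rewrite !inE (negbTE xu) orbF => /eqP.
Qed.

Lemma bndbnd A : bnd (bnd A) = set0.
Proof.
elim: {A}_.+1 {-2}A (ltnSn #|A|) => // n IH A.
case: (set_0Vmem A) => [-> _ | [s sA] cA]; first by rewrite !bnd0.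
have -> : A = symd (A :\ s) [set s].
  apply/setP=> x; rewrite in_symd !inE.
  case: (x =P s) => [->|/eqP nx]; first by rewrite ?eqxx sA /= ?addbT ?andbF.
  by rewrite /= addbF.
rewrite !bnd_symd bndbnd1 symd0 IH //.
by move: cA; rewrite (cardsD1 s A) sA.
Qed.

End Chains.
Local Open Scope ring_scope.

Lemma F2_11 : (1 + 1 : 'F_2) = 0. Proof. by apply/val_inj. Qed.
Lemma F2_10 : (1 : 'F_2) != 0. Proof. by apply/eqP=> /(congr1 val). Qed.
Lemma F2_cases (a : 'F_2) : a = 0 \/ a = 1.
Proof. case: a => [[|[|k]] Hk]; [left|right|]; try exact: val_inj. by []. Qed.

Section Vec.
Variable V : finType.
Variable K : {set {set V}}.
Variable p : nat.

Definition vec (z : {set {set V}}) : 'rV['F_2]_#|{set V}| :=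
  \row_(i < #|{set V}|) ((enum_val i \in z)%:R).

Lemma vec_symd A B : vec (symd A B) = vec A + vec B.
Proof.
apply/rowP=> i; rewrite !mxE in_symd.
case: (enum_val i \in A); case: (enum_val i \in B) => //=.
- by rewrite F2_11.
- by rewrite addr0.
- by rewrite add0r.
- by rewrite addr0.
Qed.

Lemma vec0 : vec set0 = 0.
Proof. by apply/rowP=> i; rewrite !mxE inE. Qed.

Lemma vec_inj : injective vec.
Proof.
move=> A B e; apply/setP=> x.
have := congr1 (fun M : 'rV_#|{set V}| => M 0 (enum_rank x)) e.
rewrite !mxE enum_rankK.
case: (x \in A); case: (x \in B) => //= h;
  first [by move: F2_10; rewrite h eqxx | by move: F2_10; rewrite -h eqxx].
Qed.

Lemma vec_eq0 A : (vec A == 0) = (A == set0).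
Proof. by rewrite -vec0; apply/eqP/eqP=> [/vec_inj|->]. Qed.

Lemma pchain_symd q A B : pchain K q A -> pchain K q B -> pchain K q (symd A B).
Proof.
rewrite /pchain => /subsetP hA /subsetP hB; apply/subsetP=> x; rewrite in_symd.
move=> h; case hx: (x \in A); first exact: hA.
by rewrite hx /= in h; exact: hB.
Qed.

Lemma pchain0 q : pchain K q set0.
Proof. by rewrite /pchain sub0set. Qed.

Definition Bset (u : 'rV['F_2]_#|{set V}|) : bool :=
  [exists c : {set {set V}}, pchain K p.+1 c && (u == vec (bnd c))].

Definition Bm := (\sum_(u | Bset u) <<u>>)%MS.

Definition spanL (L : seq {set {set V}}) := (\sum_(z <- L) <<vec z>>)%MS.

Lemma Bset0 : Bset 0.
Proof. by apply/existsP; exists set0; rewrite pchain0 bnd0 vec0 eqxx. Qed.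

Lemma BsetD u v : Bset u -> Bset v -> Bset (u + v).
Proof.
move=> /existsP [c /andP [hc /eqP ->]] /existsP [c' /andP [hc' /eqP ->]].
apply/existsP; exists (symd c c'); rewrite pchain_symd //=.
by rewrite bnd_symd vec_symd.
Qed.

Lemma Bm_sub u : (u <= Bm)%MS = Bset u.
Proof.
apply/idP/idP=> [|h]; last first.
  by apply: (sumsmx_sup u) => //; rewrite genmxE.
move/sub_sumsmxP=> [u_ ->].
apply: (big_ind Bset) => //; [exact: Bset0 | exact: BsetD |].
move=> i hi.
have : (u_ i *m <<i>> <= i)%MS by rewrite -(genmxE i) submxMl.
move/sub_rVP=> [a ->].
by case: (F2_cases a) => ->; rewrite ?scale0r ?scale1r //; exact: Bset0.
Qed.

Lemma vec_bnd_sub c : pchain K p.+1 c -> (vec (bnd c) <= Bm)%MS.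
Proof. by move=> h; rewrite Bm_sub; apply/existsP; exists c; rewrite h eqxx. Qed.

Lemma spanL_cons z L : spanL (z :: L) = (<<vec z>> + spanL L)%MS.
Proof. by rewrite /spanL big_cons. Qed.

Lemma spanL_nil : spanL [::] = 0.
Proof. by rewrite /spanL big_nil. Qed.

Lemma spanL_cat L1 L2 : spanL (L1 ++ L2) = (spanL L1 + spanL L2)%MS.
Proof. by rewrite /spanL big_cat. Qed.

Lemma vec_sumch_mask (b : seq bool) L : (vec (sumch (mask b L)) <= spanL L)%MS.
Proof.
elim: L b => [|z L IH] [|[] b] /=; rewrite ?vec0 ?sub0mx //.
- rewrite spanL_cons vec_symd addmx_sub_adds //; first by rewrite genmxE.
- by rewrite spanL_cons (submx_trans (IH b)) // addsmxSr.
Qed.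

Lemma in_spanE z L : in_span K p z L = (vec z <= Bm + spanL L)%MS.
Proof.
apply/idP/idP.
  move=> /existsP [b /existsP [c /andP [hc /eqP e]]].
  have -> : z = symd (bnd c) (sumch (mask b L)) by rewrite e symdK.
  by rewrite vec_symd addmx_sub_adds // ?vec_bnd_sub // vec_sumch_mask.
elim: L z => [|x L IH] z.
  rewrite spanL_nil addsmx0 Bm_sub => /existsP [c /andP [hc /eqP e]].
  apply/existsP; exists [tuple]; apply/existsP; exists c.
  by rewrite hc /= symd0 (vec_inj e).
rewrite spanL_cons addsmxA (addsmxC Bm) -addsmxA => /sub_addsmxP [[u0 v0] /= e].
set u := u0 *m _ in e; set v := v0 *m _ in e.
have hv : (v <= Bm + spanL L)%MS by rewrite submxMl.
have : (u <= vec x)%MS by rewrite -(genmxE (vec x)) submxMl.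
move=> /sub_rVP [a ea].
case: (F2_cases a) => ha; move: ea; rewrite ha ?scale0r ?scale1r => eu.
  have : in_span K p z L by apply: IH; rewrite e eu add0r.
  move=> /existsP [b hb]; apply/existsP; exists [tuple of false :: b] => /=.
  exact: hb.
have : in_span K p (symd z x) L.
  apply: IH; rewrite vec_symd e eu addrAC.
  have -> : vec x + vec x = 0.
    apply/rowP=> i; rewrite !mxE.
    by case: (_ \in _); rewrite ?addr0 ?F2_11.
  by rewrite add0r.
move=> /existsP [b /existsP [c /andP [hc /eqP hb]]].
apply/existsP; exists [tuple of true :: b]; apply/existsP; exists c => /=.
by rewrite hc hb /sumch /= -symdA.
Qed.

End Vec.
Section Greedy.
Variable V : finType.
Variable K : {set {set V}}.
Variable p : nat.
Local Notation vec := (@vec V).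
Local Notation spanL := (@spanL V).
Local Notation Bm := (Bm K p).

Lemma spanL_rcons L x : spanL (rcons L x) = (spanL L + <<vec x>>)%MS.
Proof. by rewrite /spanL big_rcons. Qed.

Lemma rank_spanL_le m (A : 'M['F_2]_(m, #|{set V}|)) L :
  (\rank (A + spanL L) <= \rank A + size L)%N.
Proof.
elim/last_ind: L => [|L x IH]; first by rewrite spanL_nil addsmx0 addn0.
rewrite spanL_rcons addsmxA size_rcons addnS.
apply: leq_trans (mxrank_adds_leqif _ _).1 _.
rewrite mxrank_gen -[X in (_ <= X)%N]addn1 leq_add //.
exact: rank_leq_row.
Qed.

Lemma rank_spanL_ge m (A : 'M['F_2]_(m, #|{set V}|)) L :
  (forall k, (k < size L)%N -> ~~ (vec (nth set0 L k) <= A + spanL (take k L))%MS) ->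
  (\rank A + size L <= \rank (A + spanL L))%N.
Proof.
elim/last_ind: L => [|L x IH] h; first by rewrite spanL_nil addsmx0 addn0.
rewrite spanL_rcons addsmxA size_rcons addnS.
have hx : ~~ (vec x <= A + spanL L)%MS.
  have := h (size L); rewrite size_rcons ltnSn nth_rcons ltnn eqxx -cats1 take_size_cat //.
  by move=> /(_ isT).
apply: leq_ltn_trans (IH _) _.
  move=> k hk; have := h k; rewrite size_rcons ltnS (ltnW hk) nth_rcons hk.
  by rewrite -cats1 takel_cat ?(ltnW hk) //; move=> /(_ isT).
apply: rank_ltmx; rewrite ltmxE addsmxSl /=.
apply: contra hx => hs; apply: submx_trans hs.
by rewrite -(genmxE (vec x)) addsmxSr.
Qed.

Lemma spanL_sub L m (C : 'M['F_2]_(m, #|{set V}|)) :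
  (forall z, z \in L -> (vec z <= C)%MS) -> (spanL L <= C)%MS.
Proof.
elim: L => [|z L IH] h; first by rewrite spanL_nil sub0mx.
rewrite spanL_cons addsmx_sub genmxE h ?mem_head // IH // => y hy.
by apply: h; rewrite inE hy orbT.
Qed.

Lemma buildM_rcons cs x : buildM K p (rcons cs x) =
  if in_span K p x (buildM K p cs) then buildM K p cs else rcons (buildM K p cs) x.
Proof. by rewrite /buildM foldl_rcons. Qed.

Lemma buildM_props cs :
  [/\ (forall z, z \in cs -> (vec z <= Bm + spanL (buildM K p cs))%MS),
      (forall k, (k < size (buildM K p cs))%N ->
         ~~ (vec (nth set0 (buildM K p cs) k) <= Bm + spanL (take k (buildM K p cs)))%MS)
    & (forall j, (j < size (buildM K p cs))%N -> exists2 q, (q < size cs)%N &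
         nth set0 cs q = nth set0 (buildM K p cs) j /\
         forall q', (q' < q)%N -> (vec (nth set0 cs q') <= Bm + spanL (take j (buildM K p cs)))%MS)].
Proof.
elim/last_ind: cs => [|cs x [IH1 IH2 IH3]].
  by rewrite /buildM /=; split=> // k; rewrite ltn0.
rewrite buildM_rcons in_spanE; set M := buildM K p cs in IH1 IH2 IH3 *.
case: ifP => hx.
  split.
  - move=> z; rewrite -cats1 mem_cat inE => /orP [/IH1 // | /eqP -> //].
  - exact: IH2.
  - move=> j /IH3 [q hq [e1 e2]]; exists q; first by rewrite size_rcons ltnS ltnW.
    by rewrite nth_rcons hq; split=> // q' hq'; rewrite nth_rcons (ltn_trans hq' hq); apply: e2.
have mono : (Bm + spanL M <= Bm + spanL (rcons M x))%MS.
  by rewrite spanL_rcons addsmxA addsmxSl.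
split.
- move=> z; rewrite -cats1 mem_cat inE => /orP [/IH1 h | /eqP ->].
    exact: submx_trans h mono.
  rewrite spanL_rcons addsmxA; apply: submx_trans (addsmxSr _ _).
  by rewrite genmxE.
- move=> k; rewrite size_rcons ltnS leq_eqVlt => /orP [/eqP -> | hk].
    by rewrite nth_rcons ltnn eqxx -cats1 take_size_cat // hx.
  by rewrite nth_rcons hk -cats1 takel_cat ?(ltnW hk) //; apply: IH2.
- move=> j; rewrite size_rcons ltnS leq_eqVlt => /orP [/eqP -> | hj].
    exists (size cs); first by rewrite size_rcons.
    rewrite !nth_rcons !ltnn !eqxx; split=> // q' hq'.
    rewrite nth_rcons hq' -cats1 take_size_cat //.
    by apply: IH1; rewrite mem_nth.
  have [q hq [e1 e2]] := IH3 j hj.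
  exists q; first by rewrite size_rcons ltnS ltnW.
  rewrite !nth_rcons hq hj; split=> // q' hq'.
  rewrite nth_rcons (ltn_trans hq' hq) -cats1 takel_cat ?(ltnW hj) //.
  exact: e2.
Qed.

End Greedy.
Section Red.
Variable V : finType.
Variable K : {set {set V}}.
Variable s : seq {set V}.
Hypothesis hK : is_complex K.
Hypothesis us : uniq s.
Hypothesis sK : forall x, (x \in s) = (x \in K).
Local Notation N := (size s).
Local Notation col := {set 'I_N}.
Local Notation sn i := (nth set0 s (i : nat)).

Definition ch (X : col) : {set {set V}} := [set nth set0 s (i : nat) | i : 'I_N in X].

Lemma sn_inj (i j : 'I_N) : sn i = sn j -> i = j.
Proof. by move=> e; apply/val_inj/eqP; rewrite -(nth_uniq set0 (ltn_ord i) (ltn_ord j) us) e. Qed.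

Lemma mem_ch (i : 'I_N) X : (sn i \in ch X) = (i \in X).
Proof.
apply/imsetP/idP=> [[j hj /sn_inj -> //] | h]; by exists i.
Qed.

Lemma snK (i : 'I_N) : sn i \in K.
Proof. by rewrite -sK mem_nth. Qed.

Lemma chP t X : t \in ch X -> exists2 i : 'I_N, t = sn i & i \in X.
Proof. by move=> /imsetP [i hi ->]; exists i. Qed.

Lemma inK_sn t : t \in K -> exists i : 'I_N, t = sn i.
Proof.
rewrite -sK => ht.
have hi : (index t s < N)%N by rewrite index_mem.
by exists (Ordinal hi) => /=; rewrite nth_index.
Qed.

Lemma ch_symd X Y : ch (symd X Y) = symd (ch X) (ch Y).
Proof.
apply/setP=> t; rewrite in_symd.
case: (boolP (t \in K)) => [/inK_sn [i ->] | ht]; first by rewrite !mem_ch in_symd.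
have nt : forall Z, t \in ch Z = false.
  by move=> Z; apply/negP => /chP [i ei _]; move: ht; rewrite ei snK.
by rewrite !nt.
Qed.

Lemma ch0 : ch set0 = set0.
Proof. by apply/setP=> t; rewrite inE; apply/negP=> /chP [i _]; rewrite inE. Qed.

Lemma ch_eq0 X : ch X = set0 -> X = set0.
Proof. by move=> e; apply/setP=> i; rewrite -mem_ch e !inE. Qed.

Lemma ch_bdcol (j : 'I_N) : ch (bdcol j) = bnd [set sn j].
Proof.
rewrite bnd1; apply/setP=> t; rewrite inE.
apply/idP/idP.
  move=> /chP [i -> hi]; rewrite inE in hi; rewrite hi andbT.
  by apply/eqP=> e; case: hK => h0 _ _; move: (snK i); rewrite e (negbTE h0).
move=> /andP [t0 ht].
have tK : t \in K.
  case: hK => _ hc _; apply: hc (snK j) _ t0.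
  by move: ht => /andP [].
have [i ei] := inK_sn tK; rewrite ei mem_ch inE -ei //.
Qed.

Lemma low_gt (c : col) (i : 'I_N) : i \in c -> (i < low c)%N.
Proof. by move=> h; exact: (@leq_bigmax_cond _ (fun i => i \in c) (fun i : 'I_N => (i : nat).+1) i h). Qed.

Lemma low_leP (c : col) m : reflect (forall i : 'I_N, i \in c -> (i < m)%N) (low c <= m)%N.
Proof. exact: (bigmax_leqP (fun i => i \in c) m (fun i : 'I_N => (i : nat).+1)). Qed.

Lemma low_mem (c : col) : c != set0 -> exists2 i : 'I_N, i \in c & low c = (i : nat).+1.
Proof.
move=> hc; have : (0 < #|c|)%N by rewrite card_gt0.
by move=> /(eq_bigmax_cond (fun i : 'I_N => (i : nat).+1)) [i hi e]; exists i.
Qed.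

Lemma low_eq0 (c : col) : (low c == 0%N) = (c == set0).
Proof.
apply/idP/idP=> [h | /eqP ->].
  apply/negPn/negP=> /low_mem [i _ e]; by rewrite e in h.
by rewrite /low big_pred0 // => i; rewrite inE.
Qed.

Lemma low_symd (A B : col) : low A != 0%N -> low A = low B -> (low (symd A B) < low A)%N.
Proof.
move=> h0 e.
have [i hi ei] : exists2 i : 'I_N, i \in A & low A = (i : nat).+1.
  by apply: low_mem; rewrite -low_eq0.
have hiB : i \in B.
  have : B != set0 by rewrite -low_eq0 -e.
  move=> /low_mem [i' hi' ei']; have : i = i' by apply/val_inj/succn_inj; rewrite -ei e ei'.
  by move=> ->.
rewrite ei ltnS; apply/low_leP=> k; rewrite in_symd.
case hk: (k == i).
  by rewrite (eqP hk) hi hiB.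
have hk' : (k : nat) != i by rewrite (inj_eq val_inj) hk.
case kA: (k \in A) => /= h.
  by rewrite ltn_neqAle hk' -ltnS -ei low_gt.
by rewrite ltn_neqAle hk' -ltnS -ei e low_gt.
Qed.

Definition good (k : nat) (q : col * col) :=
  [/\ ch q.1 = bnd (ch q.2),
      (forall i : 'I_N, i \in q.2 -> (i <= k)%N),
      (forall i : 'I_N, (i : nat) = k -> i \in q.2)
    & (forall i : 'I_N, i \in q.2 -> #|sn i| = #|sn k|)].

Definition Inv (l : seq (col * col)) :=
  (forall k, (k < size l)%N -> good k (nth (set0, set0) l k)) /\
  (forall k1 k2, (k1 < size l)%N -> (k2 < size l)%N -> k1 != k2 ->
     low (nth (set0, set0) l k1).1 != 0%N ->
     low (nth (set0, set0) l k1).1 != low (nth (set0, set0) l k2).1).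

Lemma good_facet k q (i : 'I_N) : good k q -> i \in q.1 -> (#|sn i|).+1 = #|sn k|.
Proof.
case=> e _ _ hs hi.
have : sn i \in bnd (ch q.2) by rewrite -e mem_ch.
rewrite inE => /andP [_ ho].
have : [set x in ch q.2 | facet (sn i) x] != set0.
  by apply/eqP=> e0; rewrite e0 cards0 in ho.
move=> /set0Pn [x]; rewrite inE => /andP [/chP [i' -> hi'] /andP [_ /eqP c]].
by rewrite -(hs _ hi') c.
Qed.

Lemma red_col_spec f prev (j : 'I_N) RW :
  Inv prev -> size prev = j -> good j RW ->
  good j (red_col f prev RW) /\
  ((low RW.1 < f)%N -> low (red_col f prev RW).1 = 0%N \/
      ~~ has (fun q : col * col => low q.1 == low (red_col f prev RW).1) prev).
Proof.
move=> [Ig Il] sp.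
elim: f RW => [|f IH] [R W] g /=.
  by split=> //.
set k := find _ prev.
case: ifP => [/andP [h0 hk] | hn]; last first.
  split=> // _.
  case: (boolP (low R == 0%N)) => [/eqP -> | h0]; first by left.
  right; rewrite has_find; move: hn; rewrite h0 /=.
  by move=> ->.
set q := nth (set0, set0) prev k.
have hq : low q.1 == low R by apply: (nth_find (set0, set0) (a := fun q : col * col => low q.1 == low R)); rewrite has_find.
have gq : good k q by apply: Ig.
have kj : (k < j)%N by rewrite -sp.
have g' : good j (symd R q.1, symd W q.2).
  case: (g) => e1 e2 e3 e4; case: (gq) => f1 f2 f3 f4.
  split=> /=.
  - by rewrite !ch_symd e1 f1 bnd_symd.
  - move=> i; rewrite in_symd; case hW: (i \in W) => /= h; first exact: e2.
    by rewrite ltnW // (leq_ltn_trans (f2 _ h) kj).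
  - move=> i hi; rewrite in_symd e3 //.
    by apply/negP=> /f2; rewrite hi leqNgt kj.
  - have ekj : #|sn k| = #|sn j|.
      have [i hi ei] : exists2 i : 'I_N, i \in R & low R = (i : nat).+1.
        by apply: low_mem; rewrite -low_eq0.
      have hiq : i \in q.1.
        have : q.1 != set0 by rewrite -low_eq0 (eqP hq).
        move=> /low_mem [i' hi' ei']; have : i = i' by apply/val_inj/succn_inj; rewrite -ei -(eqP hq) ei'.
        by move=> ->.
      have := good_facet g hi.
      have := good_facet gq hiq.
      by move=> <- <-.
    move=> i; rewrite in_symd; case hW: (i \in W) => /= h; first exact: e4.
    by rewrite f4.
have [g'' hl] := IH _ g'.
split=> // hf; apply: hl => /=.
have := low_symd h0 (esym (eqP hq)).
by move=> h; apply: leq_trans h _; rewrite -ltnS.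
Qed.

Definition stepf (prev : seq (col * col)) (j : 'I_N) :=
  rcons prev (red_col N.+1 prev (bdcol j, [set j])).

Lemma ch1 (j : 'I_N) : ch [set j] = [set sn j].
Proof. by rewrite /ch imset_set1. Qed.

Lemma fold_Inv js : map val js = iota 0 (size js) ->
  Inv (foldl stepf [::] js) /\ size (foldl stepf [::] js) = size js.
Proof.
elim/last_ind: js => [|js j IH]; first by move=> _; split=> //; split=> k; rewrite ltn0.
rewrite map_rcons size_rcons -addn1 iotaD add0n -cats1 => /eqP.
rewrite eqseq_cat ?size_map ?size_iota // => /andP [/eqP /IH [Ip sp] /eqP [ej]].
rewrite foldl_rcons {1}/stepf.
set prev := foldl stepf [::] js in Ip sp *.
have sp' : size prev = j by rewrite sp ej.
have g0 : good j (bdcol j, [set j]).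
  split=> /=.
  - by rewrite ch_bdcol ch1.
  - by move=> i; rewrite inE => /eqP ->.
  - by move=> i ei; rewrite inE; apply/eqP/val_inj.
  - by move=> i; rewrite inE => /eqP ->.
have := red_col_spec N.+1 Ip sp' g0.
move: (red_col N.+1 prev (bdcol j, [set j])) => x [gx hx].
have hx' : low x.1 = 0%N \/ ~~ has (fun q : col * col => low q.1 == low x.1) prev.
  apply: hx; rewrite ltnS; apply/low_leP=> i _; exact: ltn_ord.
case: Ip => Ig Il.
split; last by rewrite /stepf size_rcons sp addn1.
split.
  move=> k; rewrite size_rcons ltnS leq_eqVlt => /orP [/eqP -> | hk].
    by rewrite nth_rcons ltnn eqxx sp'.
  by rewrite nth_rcons hk; apply: Ig.
move=> k1 k2; rewrite !size_rcons !ltnS => h1 h2.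
move: h1; rewrite leq_eqVlt => /orP [/eqP e1 | h1];
move: h2; rewrite leq_eqVlt => /orP [/eqP e2 | h2] n12.
- by rewrite e1 e2 eqxx in n12.
- rewrite !nth_rcons e1 ltnn eqxx h2 => h0.
  case: hx' => [e|hn]; first by rewrite e eqxx in h0.
  apply/negP => /eqP e; move/negP: hn; apply; apply/hasP.
  exists (nth (set0, set0) prev k2); first exact: mem_nth.
  by rewrite -e; apply/eqP.
- rewrite !nth_rcons e2 ltnn eqxx h1 => h0.
  case: hx' => [e|hn]; first by rewrite e; apply: h0.
  apply/negP => /eqP e; move/negP: hn; apply; apply/hasP.
  exists (nth (set0, set0) prev k1); first exact: mem_nth.
  by rewrite e; apply/eqP.
- by rewrite !nth_rcons h1 h2; apply: Il.
Qed.

Lemma red_Inv : Inv (reduction s) /\ size (reduction s) = N.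
Proof.
have := @fold_Inv (enum 'I_N); rewrite val_enum_ord size_enum_ord.
by move=> /(_ erefl).
Qed.

Local Notation red := (reduction s).
Definition Rk (k : 'I_N) : col := (nth (set0, set0) red k).1.
Definition Vk (k : 'I_N) : col := (nth (set0, set0) red k).2.

Lemma size_red : size red = N.
Proof. by case: red_Inv. Qed.

Lemma goodk (k : 'I_N) : good k (Rk k, Vk k).
Proof.
case: red_Inv => [[Ig _] sz]; rewrite /Rk /Vk.
have hk : (k < size red)%N by rewrite sz.
by move: (Ig k hk); case: (nth _ _ _).
Qed.

Lemma distk (k1 k2 : 'I_N) : k1 != k2 -> low (Rk k1) != 0%N -> low (Rk k1) != low (Rk k2).
Proof.
case: red_Inv => [[_ Il] sz] n12; apply: Il; rewrite ?sz ?(inj_eq val_inj) //.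
Qed.

Lemma index_sn (i : 'I_N) : index (sn i) s = i.
Proof. exact: index_uniq. Qed.

Definition vsum (js : seq 'I_N) : col := foldr (fun j acc => symd (Vk j) acc) set0 js.
Definition rsum (js : seq 'I_N) : col := foldr (fun j acc => symd (Rk j) acc) set0 js.

Lemma bnd_vsum js : bnd (ch (vsum js)) = ch (rsum js).
Proof.
elim: js => [|j js IH] /=; first by rewrite ch0 bnd0.
case: (goodk j) => e _ _ _.
by rewrite !ch_symd bnd_symd IH e.
Qed.

Lemma mem_rsum js (x : 'I_N) : (x \in rsum js) = odd (count (fun j => x \in Rk j) js).
Proof.
elim: js => [|j js IH] /=; first by rewrite inE.
by rewrite in_symd IH oddD; case: (x \in Rk j).
Qed.

Lemma decomp n (X : col) : (forall i : 'I_N, i \in X -> (i < n)%N) ->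
  exists js : seq 'I_N, [/\ uniq js, (forall j, j \in js -> (j < n)%N), X = vsum js
     & forall m : 'I_N, m \in X -> (forall i : 'I_N, i \in X -> (i <= m)%N) -> m \in js].
Proof.
elim: n X => [|n IH] X hX.
  exists [::]; split=> //.
    by apply/setP=> i; rewrite inE; apply/negP=> /hX.
  by move=> m /hX.
case: (ltnP n N) => hn; last first.
  have [js [u1 u2 u3 u4]] := IH X (fun i _ => leq_trans (ltn_ord i) hn).
  by exists js; split=> // j /u2 /ltnW.
set o := Ordinal hn.
case: (boolP (o \in X)) => ho; last first.
  have hX' : forall i : 'I_N, i \in X -> (i < n)%N.
    move=> i hi; have := hX i hi; rewrite ltnS leq_eqVlt => /orP [/eqP e|//].
    have eio : i = o by apply/val_inj.
    by rewrite -eio hi in ho.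
  have [js [u1 u2 u3 u4]] := IH X hX'.
  by exists js; split=> // j /u2 /ltnW.
case: (goodk o) => _ g2 g3 _.
have ho' : o \in Vk o by apply: g3.
have hX' : forall i : 'I_N, i \in symd X (Vk o) -> (i < n)%N.
  move=> i; rewrite in_symd.
  case: (eqVneq i o) => [-> | nio]; first by rewrite ho ho'.
  have nio' : (i : nat) != n by apply: contra nio => /eqP e; apply/eqP/val_inj.
  case hi: (i \in X) => /= h.
    by have := hX i hi; rewrite ltnS leq_eqVlt (negbTE nio').
  by have := g2 i h; rewrite leq_eqVlt (negbTE nio').
have [js [u1 u2 u3 u4]] := IH _ hX'.
exists (o :: js); split.
- by rewrite /= u1 andbT; apply/negP=> /u2; rewrite ltnn.
- by move=> j; rewrite inE => /orP [/eqP -> // | /u2 /ltnW h]; rewrite ltnS.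
- by rewrite /= -u3 symdC symdK.
- move=> m hm hmax; rewrite inE.
  have : (o <= m)%N by apply: hmax.
  have := hX m hm; rewrite ltnS => h1 h2.
  by apply/orP; left; apply/eqP/val_inj/eqP; rewrite eqn_leq h1 h2.
Qed.

Lemma rsum_eq0 js : uniq js -> rsum js = set0 -> forall j, j \in js -> Rk j = set0.
Proof.
move=> u e j1 hj1; apply/eqP; apply/negPn/negP => nz.
have hP : (fun j => (j \in js) && (Rk j != set0)) j1 by rewrite hj1 nz.
case: (@arg_maxnP _ j1 (fun j => (j \in js) && (Rk j != set0)) (fun j => low (Rk j)) hP) => j0 /andP [hj0 nz0] hmax.
have [i0 hi0 ei0] := low_mem nz0.
have hin : i0 \in rsum js.
  rewrite mem_rsum.
  have -> : count (fun j => i0 \in Rk j) js = count (pred1 j0) js.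
    apply: eq_in_count => j hj /=.
    apply/idP/eqP => [h | ->]; last exact: hi0.
    apply/eqP; apply: contraT => nj.
    have nzj : Rk j != set0 by apply/set0Pn; exists i0.
    have h2 : (low (Rk j) <= low (Rk j0))%N by apply: hmax; rewrite hj nzj.
    have h1 := low_gt h; rewrite -ei0 in h1.
    have eq : low (Rk j) = low (Rk j0) by apply/eqP; rewrite eqn_leq h2 h1.
    have := distk nj; rewrite eq eqxx -eq low_eq0 nzj.
    by move=> /(_ isT).
  by rewrite count_uniq_mem // hj0.
by rewrite e inE in hin.
Qed.
Lemma chK X x : x \in ch X -> x \in K.
Proof. by move=> /chP [i -> _]; exact: snK. Qed.

Lemma bound_symd (e : {set {set V}}) (Y : col) (o : 'I_N) : e \subset K ->
  (forall x, x \in e -> (index x s <= o)%N) -> sn o \in e ->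
  (forall i : 'I_N, i \in Y -> (i <= o)%N) -> o \in Y ->
  forall x, x \in symd e (ch Y) -> (index x s < o)%N.
Proof.
move=> eK he ho hY oY x hx.
have xK : x \in K.
  move: hx; rewrite in_symd; case hxe: (x \in e) => /= h; first exact: (subsetP eK).
  exact: chK h.
have [i ei] := inK_sn xK; rewrite ei index_sn; move: hx; rewrite ei in_symd mem_ch.
case: (eqVneq i o) => [-> | nio]; first by rewrite ho oY.
have nio' : (i : nat) != o by apply: contra nio => /eqP e'; apply/eqP/val_inj.
case hie: (sn i \in e) => /= h.
  by have := he _ hie; rewrite index_sn leq_eqVlt (negbTE nio').
by have := hY _ h; rewrite leq_eqVlt (negbTE nio').
Qed.

Lemma pchain_ch q (X : col) : (forall i : 'I_N, i \in X -> #|sn i| = q.+1) -> pchain K q (ch X).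
Proof.
move=> h; apply/subsetP=> x /chP [i -> hi]; rewrite inE snK /=.
by rewrite h.
Qed.

Lemma vec_split (e Z : {set {set V}}) : vec e = vec (symd e Z) + vec Z.
Proof. by rewrite -vec_symd symdK. Qed.

Lemma KL q m (T : 'M['F_2]_(m, #|{set V}|)) t :
  (Bm K q <= T)%MS ->
  (forall j : 'I_N, j \in ess_idx s q -> (j <= t)%N -> (vec (ch (Vk j)) <= T)%MS) ->
  forall e, pcycle K q e -> (forall x, x \in e -> (index x s <= t)%N) -> (vec e <= T)%MS.
Proof.
move=> hB hE.
suff H : forall n, (n <= t.+1)%N -> forall e, pcycle K q e ->
    (forall x, x \in e -> (index x s < n)%N) -> (vec e <= T)%MS.
  by move=> e he hi; apply: (H t.+1) => // x /hi.
elim=> [|n IH] hn e [pe be] hi.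
  have -> : e = set0 by apply/setP=> x; rewrite inE; apply/negP=> /hi.
  by rewrite vec0 sub0mx.
have eK : e \subset K.
  by apply: subset_trans pe _; apply/subsetP=> x; rewrite inE => /andP [].
case: (boolP [exists x in e, index x s == n]) => [/exists_inP [x0 hx0 /eqP ix0] | hno]; last first.
  apply: (IH (ltnW hn)) => // x hx.
  have := hi x hx; rewrite ltnS leq_eqVlt => /orP [/eqP e1|//].
  by move/exists_inP: hno; case; exists x => //; rewrite e1.
have hn' : (n < N)%N by rewrite -ix0 index_mem sK (subsetP eK).
set o := Ordinal hn'.
have so : sn o = x0 by rewrite /= -ix0 nth_index // sK (subsetP eK).
have so' : #|sn o| = q.+1.
  by move: (subsetP pe _ hx0); rewrite inE so => /andP [_ /eqP].
have hmax : forall x, x \in e -> (index x s <= o)%N by move=> x /hi.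
have hoe : sn o \in e by rewrite so.
case: (boolP (has (fun qq : col * col => low qq.1 == n.+1) red)) => hh.
  have hk0 : (find (fun qq : col * col => low qq.1 == n.+1) red < N)%N.
    by have := hh; rewrite has_find size_red.
  set k := Ordinal hk0.
  have hlow : low (Rk k) == n.+1 by apply: (nth_find (set0, set0) hh).
  have nz : Rk k != set0 by rewrite -low_eq0 (eqP hlow).
  have hok : o \in Rk k.
    have [i hi' ei] := low_mem nz; have -> : o = i by apply/val_inj/succn_inj; rewrite -ei (eqP hlow).
    exact: hi'.
  have gk := goodk k; case: (gk) => e1 e2 e3 e4.
  have sk : #|sn k| = q.+2 by rewrite -(good_facet gk hok) so'.
  have pV : pchain K q.+1 (ch (Vk k)) by apply: pchain_ch => i /e4 ->.
  rewrite (vec_split e (ch (Rk k))) addmx_sub //.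
    apply: (IH (ltnW hn)).
      split; first by apply: pchain_symd => //; apply: pchain_ch => i hi'; apply/succn_inj; rewrite (good_facet gk hi') sk.
      by rewrite bnd_symd be e1 bndbnd symd0.
    move=> x hx; apply: (bound_symd (o := o) _ _ _ _ _ hx) => // i hi'.
    by have := low_gt hi'; rewrite (eqP hlow) ltnS.
  by rewrite e1; apply: submx_trans (vec_bnd_sub pV) hB.
have eX : e = ch [set i : 'I_N | sn i \in e].
  apply/setP=> x; case: (boolP (x \in K)) => [/inK_sn [i ->] | xK]; first by rewrite mem_ch inE.
  apply/idP/idP=> [hx | /chK]; last by rewrite (negbTE xK).
  by move: xK; rewrite (subsetP eK).
have [js [u1 _ u3 u4]] := @decomp N [set i : 'I_N | sn i \in e] (fun i _ => ltn_ord i).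
have ojs : o \in js.
  by apply: u4; rewrite ?inE // => i; rewrite inE => /hmax; rewrite index_sn.
have Ro : Rk o = set0.
  apply: (rsum_eq0 u1 _ ojs); apply: ch_eq0.
  by rewrite -bnd_vsum -u3 -eX.
case: (goodk o) => e1 e2 e3 e4.
have oess : o \in ess_idx s q.
  rewrite mem_filter mem_enum andbT so' eqxx /=.
  by rewrite -/(Rk o) Ro eqxx.
rewrite (vec_split e (ch (Vk o))) addmx_sub //; last by apply: hE.
apply: (IH (ltnW hn)).
  split; first by apply: pchain_symd => //; apply: pchain_ch => i /e4 ->.
  by rewrite bnd_symd be -e1 Ro ch0 symd0.
move=> x hx; apply: (bound_symd (o := o) _ _ _ _ _ hx) => //; exact: e3.
Qed.

Lemma ess_map q : ess s q = map (fun j => ch (Vk j)) (ess_idx s q).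
Proof. by []. Qed.

Lemma ess_cyc q (j : 'I_N) : j \in ess_idx s q -> pcycle K q (ch (Vk j)).
Proof.
rewrite mem_filter => /andP [/and3P [sj Rj _] _].
case: (goodk j) => e1 _ _ e4; split.
  by apply: pchain_ch => i /e4 ->; apply/eqP.
have R0 : Rk j = set0 by apply/eqP.
by rewrite -e1 R0 ch0.
Qed.

Lemma nth_ess q i : (i < size (ess s q))%N ->
  exists2 j : 'I_N, j \in ess_idx s q & nth set0 (ess s q) i = ch (Vk j).
Proof.
rewrite ess_map size_map => hi.
case E: (ess_idx s q) hi => [|j0 l] // hi.
exists (nth j0 (j0 :: l) i); first by rewrite -E mem_nth // E.
by rewrite (nth_map j0).
Qed.

End Red.
Lemma bnd_pchain (V : finType) (K : {set {set V}}) q c :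
  is_complex K -> pchain K q.+1 c -> pchain K q (bnd c).
Proof.
move=> [_ hc _] /subsetP pc; apply/subsetP=> t; rewrite /bnd [in X in X -> _]inE => /andP [t0 ho].
have : [set x in c | facet t x] != set0 by apply/eqP=> e0; rewrite e0 cards0 in ho.
move=> /set0Pn [x]; rewrite inE => /andP [xc /andP [tx /eqP ctx]].
move: (pc x xc); rewrite inE => /andP [xK /eqP cx].
by rewrite inE (hc x t xK tx t0) /=; move: cx; rewrite ctx => [[->]].
Qed.

Section Geo.
Variable R : realType.
Local Open Scope ring_scope.

Lemma minseq_le (l : seq R) x : x \in l -> minseq l <= x.
Proof.
case: l => [//|y l] /=.
elim: l y x => [|z l IH] y x; first by rewrite inE => /eqP ->.
rewrite /= inE => /orP [/eqP -> | hx]; rewrite ge_min.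
- by apply/orP; right; apply: IH; exact: mem_head.
- rewrite inE in hx; case/orP: hx => [/eqP -> | hx]; first by rewrite lexx.
  by apply/orP; right; apply: IH; rewrite inE hx orbT.
Qed.

Lemma minseq_mem (l : seq R) : l != [::] -> minseq l \in l.
Proof.
case: l => [//|y l] _ /=.
elim: l => [|z l IH]; first by rewrite inE.
rewrite /= /Num.min; case: ifP => _; rewrite !inE.
  by rewrite eqxx orbT.
by move: IH; rewrite inE => /orP [-> | ->]; rewrite ?orbT.
Qed.

Variable d : nat.
Variable V : finType.
Variable pt : V -> 'rV[R]_d.

Lemma rs_ge0 v (sg : {set V}) : 0 <= rs pt v sg.
Proof.
rewrite /rs; apply: (big_ind (fun y => 0 <= y)) => [//|x y hx hy|x _].
  by rewrite le_max hx.
exact: sqrtr_ge0.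
Qed.

Lemma rs_le_rc v (c : {set {set V}}) sg : sg \in c -> rs pt v sg <= rc pt v c.
Proof. by move=> h; rewrite /rc (le_bigmax_cond _ _ h). Qed.

Lemma rc_le v (c : {set {set V}}) y : 0 <= y -> (forall sg, sg \in c -> rs pt v sg <= y) -> rc pt v c <= y.
Proof. by move=> h0 h; apply/bigmax_leP; split. Qed.

End Geo.
Local Open Scope ring_scope.
Unset Implicit Arguments.
Set Strict Implicit.

Theorem mainTheorem4 (R : realType) (d : nat) (V : finType) (pt : V -> 'rV[R]_d)
  (K : {set {set V}}) (p : nat) (ord : V -> seq {set V}) (omega : seq (V * nat)) :
  injective pt -> is_complex K -> (0 < p)%N ->
  valid_orders pt K ord -> valid_omega pt p ord omega ->
  forall zeta' : seq {set {set V}},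
    size zeta' = size (Mcycles p K ord omega) ->
    (forall z, z \in zeta' -> pcycle K p z) ->
    (forall z, pcycle K p z -> in_span K p z zeta') ->
    (forall i j, (i < size zeta')%N -> (j < size zeta')%N ->
       rPcls pt K p (nth set0 zeta' i) < rPcls pt K p (nth set0 zeta' j) -> (i < j)%N) ->
    forall j, (j < size zeta')%N ->
      rP pt (nth set0 (Mcycles p K ord omega) j) <= rPcls pt K p (nth set0 zeta' j).
Proof.
move=> injpt hK p0 hord hom zeta' hsz hcyc hspan hidx j hj.
have [om_uniq om_mem om_ord om_ord2] := hom.
have := buildM_props K p [seq omcyc p ord a | a <- omega].
rewrite -/(Mcycles p K ord omega).
set M := Mcycles p K ord omega in hsz *.
set cs := [seq omcyc p ord a | a <- omega].
move=> [P1 P2 P3].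
have om_cyc : forall a, a \in omega -> pcycle K p (omcyc p ord a).
  move=> a; rewrite om_mem => hs.
  have [uo so _] := hord a.1.
  rewrite /omcyc; have [j' hj' ->] := nth_ess hs.
  exact: (ess_cyc hK uo so hj').
have M_cyc : forall z, z \in M -> pcycle K p z.
  move=> z /(nthP set0) [k hk <-].
  have [q hq [e1 _]] := P3 k hk.
  have : nth set0 cs q \in cs := mem_nth set0 hq.
  by rewrite e1 => /mapP [a ha ->]; apply: om_cyc.
rewrite leNgt; apply/negP => hlt.
have hjM : (j < size M)%N by rewrite -hsz.
have [q hq [eq1 hq']] := P3 j hjM.
have hq0 : (q < size omega)%N by rewrite -(size_map (omcyc p ord)).
have [a0 _] : exists a0 : V * nat, True.
  by case E: omega hq0 => [|x l] //; exists x.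
set a := nth a0 omega q.
have ha : a \in omega := mem_nth a0 hq0.
have eMj : nth set0 M j = omcyc p ord a by rewrite -eq1 (nth_map a0).
have hrho : rP pt (nth set0 M j) <= rc pt a.1 (omcyc p ord a).
  by rewrite eMj /rP; apply: minseq_le; apply/mapP; exists a.1; rewrite ?mem_enum.
have hlt2 : rPcls pt K p (nth set0 zeta' j) < rc pt a.1 (omcyc p ord a).
  exact: lt_le_trans hlt hrho.
set T := (Bm K p + spanL (take j M))%MS.
have key : forall k, (k <= j)%N -> (vec (nth set0 zeta' k) <= T)%MS.
  move=> k hk.
  have hk' : (k < size zeta')%N by exact: leq_ltn_trans hk hj.
  set z := nth set0 zeta' k.
  have zc : pcycle K p z by apply: hcyc; rewrite mem_nth.
  have hzr : rPcls pt K p z <= rPcls pt K p (nth set0 zeta' j).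
    rewrite leNgt; apply/negP=> h; have := hidx _ _ hj hk' h.
    by rewrite ltnNge hk.
  case: (eqVneq z set0) => [-> | z0]; first by rewrite vec0 sub0mx.
  set S := [set e : {set {set V}} | (e != set0) && homologous K p z e].
  set L := [seq rc pt v e | v <- enum V, e <- enum S].
  have hLne : L != [::].
    have [sg hsg] := set0Pn _ z0.
    have : sg \in [set s in K | #|s| == p.+1] by apply: (subsetP zc.1).
    rewrite inE => /andP [_ /eqP csg].
    have : (0 < #|sg|)%N by rewrite csg.
    rewrite card_gt0 => /set0Pn [x _].
    have : rc pt x z \in L.
      apply: allpairs_f; rewrite mem_enum // inE z0 /=.
      apply/existsP; exists set0; rewrite pchain0 bnd0 /=.
      by apply/eqP/setP=> y; rewrite in_symd addbb inE.
    by case: (L).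
  have := minseq_mem hLne; rewrite -/(rPcls pt K p z).
  move=> /allpairsP [[v e] /= [_ he erc]].
  rewrite mem_enum inE in he; case/andP: he => e0 /existsP [c /andP [pc /eqP bc]].
  have ee : e = symd z (bnd c) by rewrite bc symdA symdd sym0d.
  have ec : pcycle K p e.
    split; first by rewrite ee; apply: pchain_symd zc.1 (bnd_pchain hK pc).
    by rewrite ee bnd_symd zc.2 bndbnd symd0.
  have ez : z = symd e (bnd c) by rewrite ee symdK.
  rewrite ez vec_symd addmx_sub //; last first.
    exact: submx_trans (vec_bnd_sub pc) (addsmxSl _ _).
  have [uo so oo] := hord v.
  have [sg0 hsg0] := set0Pn _ e0.
  case: (@arg_maxnP _ sg0 (fun x => x \in e) (fun x => index x (ord v)) hsg0) => tau htau hmax.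
  have tauK : tau \in K.
    by have := subsetP ec.1 _ htau; rewrite inE => /andP [].
  apply: (@KL _ K (ord v) hK uo so p _ T (index tau (ord v))) => //.
  - exact: addsmxSl.
  - move=> j' hj' hjt.
    set i := index j' (ess_idx (ord v) p).
    have hi : (i < size (ess (ord v) p))%N by rewrite ess_map size_map index_mem.
    have ei : omcyc p ord (v, i) = ch (Vk j').
      by rewrite /omcyc /= ess_map (nth_map j') ?index_mem // nth_index.
    have vi : (v, i) \in omega by rewrite om_mem.
    have hrad : rc pt v (ch (Vk j')) <= rc pt v e.
      apply: le_trans (rs_le_rc pt v htau).
      apply: rc_le; first exact: rs_ge0.
      move=> sg /chP [i' -> hi'].
      have hi't : (i' <= index tau (ord v))%N.
        case: (goodk hK uo so j') => _ g2 _ _.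
        exact: leq_trans (g2 _ hi') hjt.
      rewrite leNgt; apply/negP => hrs.
      have := oo tau (nth set0 (ord v) i') tauK (snK so i').
      rewrite hrs orbT => /(_ isT).
      by rewrite index_sn // ltnNge hi't.
    have hlt3 : rc pt (v, i).1 (omcyc p ord (v, i)) < rc pt a.1 (omcyc p ord a).
      rewrite ei /=; apply: le_lt_trans hrad _.
      by rewrite -erc; apply: le_lt_trans hzr hlt2.
    have idx := om_ord _ _ vi ha hlt3.
    have ia : index a omega = q by apply: index_uniq.
    rewrite ia in idx.
    have := hq' _ idx.
    by rewrite (nth_map a0) ?index_mem // nth_index // ei.
have hA : (Bm K p + spanL (take j.+1 zeta') <= T)%MS.
  rewrite addsmx_sub addsmxSl /=; apply: spanL_sub => z /(nthP set0) [k hk <-].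
  rewrite size_takel // in hk.
  by rewrite nth_take //; apply: key.
have hW : (Bm K p + spanL M <= Bm K p + spanL zeta')%MS.
  rewrite addsmx_sub addsmxSl /=; apply: spanL_sub => z /M_cyc /hspan.
  by rewrite in_spanE.
have r1 := rank_spanL_le (Bm K p) (take j M).
rewrite size_takel ?(ltnW hjM) // in r1.
have r2 := rank_spanL_ge P2.
have r3 := mxrankS hW.
have r4 : (\rank (Bm K p + spanL zeta') <=
           \rank (Bm K p + spanL (take j.+1 zeta')) + (size zeta' - j.+1))%N.
  rewrite -{1}(cat_take_drop j.+1 zeta') spanL_cat addsmxA.
  by apply: leq_trans (rank_spanL_le _ _) _; rewrite size_drop.
have r5 := mxrankS hA.
move: r1 r2 r3 r4 r5; rewrite -/T hsz => r1 r2 r3 r4 r5.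
move: hjM; rewrite hsz in hj.
lia.
Qed.
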